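(* Let $n \ge 2$ and let $\tilde{\mathcal{C}} = [\tilde{\mathbf{x}}_1, \ldots, \tilde{\mathbf{x}}_n]^\top \in \mathbb{R}^{n \times 3}$ be a set of coordinates with adjacency (pairwise distance) matrix $\tilde{d}$, i.e. $\tilde{d}_{ij} = \|\tilde{\mathbf{x}}_i - \tilde{\mathbf{x}}_j\|$. Fix indices $u \neq v$ in $\{1,\ldots,n\}$ with $\tilde{\mathbf{x}}_u \neq \tilde{\mathbf{x}}_v$, let $\delta > 0$, and let $\hat{d} = \tilde{d} + \delta \bar{e}_{uv}$, where $\bar{e}_{uv}$ is the $n\times n$ matrix whose $(u,v)$ and $(v,u)$ entries equal $1$ and all other entries equal $0$. Consider the optimization problem $$f(\hat{d}) \triangleq \min_{\hat{\mathcal{C}} = [\hat{\mathbf{x}}_1, \ldots, \hat{\mathbf{x}}_n]} \sum_{i<j} \left( \|\hat{\mathbf{x}}_i - \hat{\mathbf{x}}_j\| - \hat{d}_{ij} \right)^2 .$$ Define the approximate solution $\hat{\mathcal{C}} = \tilde{\mathcal{C}} + \frac{\delta}{2(n-1)} \frac{\partial \tilde{d}_{uv}}{\partial \tilde{\mathcal{C}}}$, i.e. $\hat{\mathbf{x}}_u = \tilde{\mathbf{x}}_u + \frac{\delta}{2(n-1)}\boldsymbol{\lambda}_{uv}$, $\hat{\mathbf{x}}_v = \tilde{\mathbf{x}}_v - \frac{\delta}{2(n-1)}\boldsymbol{\lambda}_{uv}$, and $\hat{\mathbf{x}}_w = \tilde{\mathbf{x}}_w$ for $w \neq u,v$, where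 $\boldsymbol{\lambda}_{uv} = \frac{\tilde{\mathbf{x}}_u - \tilde{\mathbf{x}}_v}{\|\tilde{\mathbf{x}}_u - \tilde{\mathbf{x}}_v\|}$. Then the objective value at this approximate solution satisfies $$\sum_{i<j} \left( \|\hat{\mathbf{x}}_i - \hat{\mathbf{x}}_j\| - \hat{d}_{ij} \right)^2 \le \frac{2n^2 - 7n + 6}{2(n-1)^2}\,\delta^2,$$ and in particular $f(\hat{d}) \le \frac{2n^2 - 7n + 6}{2(n-1)^2}\,\delta^2$.
   Context: Norms $\|\cdot\|$ on vectors in $\mathbb{R}^3$ are Euclidean. $\frac{\partial \tilde{d}_{uv}}{\partial \tilde{\mathcal{C}}}$ denotes the $n\times 3$ matrix of partial derivatives of $\tilde{d}_{uv} = \|\tilde{\mathbf{x}}_u - \tilde{\mathbf{x}}_v\|$ with respect to the rows of $\tilde{\mathcal{C}}$: its row $u$ is $\boldsymbol{\lambda}_{uv}$, its row $v$ is $-\boldsymbol{\lambda}_{uv}$, and all other rows are zero. *)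

(* Defs.v *)
From HB Require Import structures.
From mathcomp Require Import all_boot all_order all_algebra.
From mathcomp Require Import reals classical_sets.
Set Implicit Arguments. Unset Strict Implicit. Unset Printing Implicit Defensive.
Import Order.TTheory GRing.Theory Num.Theory.
Local Open Scope ring_scope.
Local Open Scope classical_set_scope.

Section Defs.
Variable R : realType.

Definition enorm (x : 'rV[R]_3) : R := Num.sqrt (\sum_(k < 3) x 0 k ^+ 2).

Definition distmx n (C : 'M[R]_(n, 3)) : 'M[R]_n :=
  \matrix_(i, j) enorm (row i C - row j C).

Definition ebar n (u v : 'I_n) : 'M[R]_n :=
  \matrix_(i, j) (if ((i == u) && (j == v)) || ((i == v) && (j == u)) then 1 else 0).

Definition lambda_uv n (C : 'M[R]_(n, 3)) (u v : 'I_n) : 'rV[R]_3 :=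
  (enorm (row u C - row v C))^-1 *: (row u C - row v C).

(* d d_uv / d C : row u is lambda_uv, row v is -lambda_uv, other rows zero. *)
Definition ddist_dC n (C : 'M[R]_(n, 3)) (u v : 'I_n) : 'M[R]_(n, 3) :=
  \matrix_(w, k) (if w == u then lambda_uv C u v 0 k
                  else if w == v then - lambda_uv C u v 0 k else 0).

Definition stress n (C : 'M[R]_(n, 3)) (d : 'M[R]_n) : R :=
  \sum_(i < n) \sum_(j < n | (i < j)%N) (enorm (row i C - row j C) - d i j) ^+ 2.

Definition fopt n (d : 'M[R]_n) : R :=
  inf [set stress C d | C in [set: 'M[R]_(n, 3)]].

End Defs.

(* Main.v *)
Require Import Defs.
From HB Require Import structures.
From mathcomp Require Import all_boot all_order all_algebra.
From mathcomp Require Import reals classical_sets.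
From mathcomp Require Import ring lra.
Import Order.TTheory GRing.Theory Num.Theory.
Local Open Scope ring_scope.

Section H.
Variable R : realType.

Lemma enorm_ge0 (x : 'rV[R]_3) : 0 <= enorm x.
Proof. exact: sqrtr_ge0. Qed.

Lemma sum3 (f : 'I_3 -> R) : \sum_(k < 3) f k = f 0 + f 1 + f 2%:R.
Proof. rewrite !big_ord_recl big_ord0 addr0 addrA; congr (f _ + f _ + f _); exact: val_inj. Qed.

Lemma enormZ (c : R) (x : 'rV[R]_3) : enorm (c *: x) = `|c| * enorm x.
Proof.
rewrite /enorm -sqrtr_sqr -sqrtrM ?sqr_ge0 //; congr Num.sqrt.
rewrite mulr_sumr; apply: eq_bigr => k _; rewrite mxE; ring.
Qed.

Lemma enormN (x : 'rV[R]_3) : enorm (- x) = enorm x.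
Proof. by rewrite -scaleN1r enormZ normrN normr1 mul1r. Qed.

Lemma enorm_triangle (x b : 'rV[R]_3) : enorm (x + b) <= enorm x + enorm b.
Proof.
rewrite /enorm.
set A := \sum_(k < 3) x 0 k ^+ 2.
set B := \sum_(k < 3) b 0 k ^+ 2.
have A0 : 0 <= A by apply: sumr_ge0 => k _; exact: sqr_ge0.
have B0 : 0 <= B by apply: sumr_ge0 => k _; exact: sqr_ge0.
have sa0 := sqrtr_ge0 A; have sb0 := sqrtr_ge0 B.
have sa2 := sqr_sqrtr A0; have sb2 := sqr_sqrtr B0.
set sa := Num.sqrt A in sa0 sa2 *; set sb := Num.sqrt B in sb0 sb2 *.
rewrite -[sa + sb]ger0_norm ?addr_ge0 // -sqrtr_sqr ler_sqrt ?sqr_ge0 //.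
rewrite sum3.
move: sa2 sb2; rewrite /A /B !sum3 !mxE => sa2 sb2.
set x0 := x 0 0; set x1 := x 0 1; set x2 := x 0 2%:R.
set b0 := b 0 0; set b1 := b 0 1; set b2 := b 0 2%:R.
set dot := x0 * b0 + x1 * b1 + x2 * b2.
have lag : dot ^+ 2 <= (sa * sb) ^+ 2.
  rewrite exprMn sa2 sb2 -subr_ge0.
  have -> : (x0 ^+ 2 + x1 ^+ 2 + x2 ^+ 2) * (b0 ^+ 2 + b1 ^+ 2 + b2 ^+ 2) - dot ^+ 2
    = (x0 * b1 - x1 * b0) ^+ 2 + (x0 * b2 - x2 * b0) ^+ 2 + (x1 * b2 - x2 * b1) ^+ 2
    by rewrite /dot; ring.
  by rewrite !addr_ge0 ?sqr_ge0.
have hd : dot <= sa * sb.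
  have p0 : 0 <= sa * sb by exact: mulr_ge0.
  nra.
have -> : (x0 + b0) ^+ 2 + (x1 + b1) ^+ 2 + (x2 + b2) ^+ 2
  = (x0 ^+ 2 + x1 ^+ 2 + x2 ^+ 2) + (b0 ^+ 2 + b1 ^+ 2 + b2 ^+ 2) + 2 * dot
  by rewrite /dot; ring.
rewrite -sa2 -sb2. nra.
Qed.

Lemma enorm_sq (x b : 'rV[R]_3) : (enorm (x + b) - enorm x) ^+ 2 <= enorm b ^+ 2.
Proof.
have h1 := enorm_triangle x b.
have h2 := enorm_triangle (x + b) (- b).
rewrite addrK enormN in h2.
have := enorm_ge0 b; have := enorm_ge0 x; have := enorm_ge0 (x + b). nra.
Qed.

Variable n : nat.
Definition ind (b : bool) : R := (b : nat)%:R.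

Lemma P1 (a : 'I_n) : \sum_(i < n) \sum_(j < n) ind (i < j)%N * ind (i == a) = \sum_(j < n) ind (a < j)%N.
Proof.
rewrite (bigD1 a) //= [X in _ + X]big1 ?addr0; last first.
  move=> i /negbTE hi; apply: big1 => j _; by rewrite /ind hi mulr0.
by apply: eq_bigr => j _; rewrite /ind eqxx mulr1.
Qed.

Lemma P2 (a : 'I_n) : \sum_(i < n) \sum_(j < n) ind (i < j)%N * ind (j == a) = \sum_(j < n) ind (j < a)%N.
Proof.
rewrite exchange_big (bigD1 a) //= [X in _ + X]big1 ?addr0; last first.
  move=> i /negbTE hi; apply: big1 => j _; by rewrite /ind hi mulr0.
by apply: eq_bigr => j _; rewrite /ind eqxx mulr1.
Qed.

Lemma P3 (a b : 'I_n) : \sum_(i < n) \sum_(j < n) ind (i < j)%N * (ind (i == a) * ind (j == b)) = ind (a < b)%N.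
Proof.
rewrite (bigD1 a) //= [X in _ + X]big1 ?addr0; last first.
  move=> i /negbTE hi; apply: big1 => j _; by rewrite /ind hi mul0r mulr0.
rewrite (bigD1 b) //= [X in _ + X]big1 ?addr0; last first.
  move=> j /negbTE hj; by rewrite /ind hj !mulr0.
by rewrite /ind !eqxx !mulr1.
Qed.

Lemma P4 (a : 'I_n) : \sum_(j < n) ind (a < j)%N + \sum_(j < n) ind (j < a)%N = n%:R - 1.
Proof.
rewrite -big_split /=.
have hn : \sum_(j < n) (1 : R) = n%:R by rewrite sumr_const card_ord.
rewrite (bigD1 a) //= in hn.
rewrite (bigD1 a) //= ltnn /ind add0r -hn.
rewrite (addrC 1) addrK (_ : (false%:R : R) = 0) // add0r.
apply: eq_bigr => j hj; case: ltngtP => h; rewrite /= ?addr0 ?add0r //. by move: hj; rewrite -(inj_eq val_inj) /= h eqxx.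
Qed.

Lemma sumlin (e K : R) (F1 F2 F3 F4 G1 G2 : 'I_n -> 'I_n -> R) :
  \sum_(i < n) \sum_(j < n) (e * (F1 i j + F2 i j + F3 i j + F4 i j) + K * (G1 i j + G2 i j))
  = e * (\sum_(i < n) \sum_(j < n) F1 i j + \sum_(i < n) \sum_(j < n) F2 i j
       + \sum_(i < n) \sum_(j < n) F3 i j + \sum_(i < n) \sum_(j < n) F4 i j)
    + K * (\sum_(i < n) \sum_(j < n) G1 i j + \sum_(i < n) \sum_(j < n) G2 i j).
Proof.
rewrite !mulrDr !mulr_sumr -!big_split /=; apply: eq_bigr => i _.
rewrite !mulr_sumr -!big_split /=; apply: eq_bigr => j _; ring.
Qed.

End H.

Theorem theorem4p1 (R : realType) (n : nat) (C : 'M[R]_(n, 3)) (u v : 'I_n)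
  (delta : R) :
  (2 <= n)%N -> u != v -> row u C != row v C -> 0 < delta ->
  let dhat := distmx C + delta *: ebar R u v in
  let Chat := C + (delta / (2 * (n%:R - 1))) *: ddist_dC C u v in
  let bound := (2 * n%:R ^+ 2 - 7 * n%:R + 6) / (2 * (n%:R - 1) ^+ 2) * delta ^+ 2 in
  stress Chat dhat <= bound /\ fopt dhat <= bound.
Proof.
move=> hn huv hC hd dhat Chat bound.
have huv' : (v == u) = false by rewrite eq_sym (negbTE huv).
set a := row u C - row v C.
set D := enorm a.
have D0 : 0 < D.
  rewrite /D /enorm sqrtr_gt0 lt_def sumr_ge0 ?andbT; last by move=> k _; exact: sqr_ge0.
  apply/eqP => hs; move: hC; rewrite -subr_eq0 => /eqP; apply; apply/rowP => k.
  have := @psumr_eq0P _ _ xpredT (fun k => a 0 k ^+ 2) (fun k _ => sqr_ge0 (a 0 k)) hs k isT.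
  by move/eqP; rewrite sqrf_eq0 => /eqP h; rewrite [RHS]mxE; exact: h.
have Dn0 : D != 0 by rewrite gt_eqF.
set lam := D^-1 *: a.
have hn1 : 1 < (n%:R : R) by rewrite ltr1n.
set eps := delta / (2 * (n%:R - 1)).
have eps0 : 0 < eps by rewrite /eps divr_gt0 // mulr_gt0 // subr_gt0.
have elam : enorm (eps *: lam) = eps.
  by rewrite /lam !enormZ -/D ger0_norm ?ltW // ger0_norm ?invr_ge0 ?ltW // mulVf // mulr1.
have elamN : enorm (- (eps *: lam)) = eps by rewrite enormN.
have rowChat : forall w, row w Chat = row w C +
    (if w == u then eps *: lam else if w == v then - (eps *: lam) else 0).
  move=> w; apply/rowP => k; rewrite /Chat !mxE.
  by case: (w == u); case: (w == v); rewrite !mxE ?mulrN ?mulr0 ?addr0.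
have dhatE : forall i j, dhat i j = enorm (row i C - row j C)
   + delta * (if ((i == u) && (j == v)) || ((i == v) && (j == u)) then 1 else 0).
  by move=> i j; rewrite /dhat !mxE.
set K := (2 * eps - delta) ^+ 2 - 2 * eps ^+ 2.
pose g i j := eps ^+ 2 * (ind R (i == u) + ind R (j == u) + ind R (i == v) + ind R (j == v))
   + K * (ind R (i == u) * ind R (j == v) + ind R (i == v) * ind R (j == u)).
have onein : forall i j b, row i Chat - row j Chat = (row i C - row j C) + b ->
    enorm b = eps -> ~~ (((i == u) && (j == v)) || ((i == v) && (j == u))) ->
    (enorm (row i Chat - row j Chat) - dhat i j) ^+ 2 <= eps ^+ 2.
  move=> i j b hr hb hne; rewrite hr dhatE (negbTE hne) mulr0 addr0 -hb.
  exact: enorm_sq.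
have i1 : ind R true = 1 by rewrite /ind mulr1n.
have i0 : ind R false = 0 by rewrite /ind mulr0n.
have key : forall i j : 'I_n, (i < j)%N ->
    (enorm (row i Chat - row j Chat) - dhat i j) ^+ 2 <= g i j.
  move=> i j hij.
  have hne : i != j by apply/eqP => e; rewrite e ltnn in hij.
  have [ei | hiu] := eqVneq i u.
    subst i.
    have [ej | hjv] := eqVneq j v.
      subst j.
      have hr : row u Chat - row v Chat = (1 + 2 * eps / D) *: a.
        rewrite !rowChat !eqxx huv' /lam; apply/rowP => k; rewrite !mxE.
        by field.
      have hpos : 0 <= 1 + 2 * eps / D by rewrite addr_ge0 // divr_ge0 // ltW // mulr_gt0.
      rewrite hr enormZ ger0_norm // -/D dhatE !eqxx (negbTE huv) /= -/a -/D mulr1.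
      rewrite /g !eqxx (negbTE huv) huv' !i1 !i0 /K.
      rewrite le_eqVlt; apply/orP; left; apply/eqP; by field.
    have hju : j != u by rewrite eq_sym.
    rewrite /g !eqxx (negbTE huv) (negbTE hju) (negbTE hjv) !i1 !i0.
    apply: le_trans (onein u j (eps *: lam) _ elam _) _.
    - by rewrite !rowChat !eqxx (negbTE hju) (negbTE hjv); apply/rowP => k; rewrite !mxE; ring.
    - by rewrite !eqxx (negbTE hjv) (negbTE huv).
    - by rewrite le_eqVlt; apply/orP; left; apply/eqP; ring.
  have [ei | hiv] := eqVneq i v.
    subst i.
    have [ej | hju] := eqVneq j u.
      subst j.
      have hr : row v Chat - row u Chat = - ((1 + 2 * eps / D) *: a).
        rewrite !rowChat !eqxx huv' /lam; apply/rowP => k; rewrite !mxE.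
        by field.
      have hpos : 0 <= 1 + 2 * eps / D by rewrite addr_ge0 // divr_ge0 // ltW // mulr_gt0.
      rewrite hr enormN enormZ ger0_norm // -/D dhatE !eqxx huv' /= mulr1.
      rewrite -[row v C - row u C]opprB enormN -/a -/D.
      rewrite /g !eqxx (negbTE huv) huv' !i1 !i0 /K.
      rewrite le_eqVlt; apply/orP; left; apply/eqP; by field.
    have hjv : j != v by rewrite eq_sym.
    rewrite /g !eqxx huv' (negbTE hju) (negbTE hjv) !i1 !i0.
    apply: le_trans (onein v j (- (eps *: lam)) _ elamN _) _.
    - by rewrite !rowChat !eqxx huv' (negbTE hju) (negbTE hjv); apply/rowP => k; rewrite !mxE; ring.
    - by rewrite !eqxx (negbTE hju) huv'.
    - by rewrite le_eqVlt; apply/orP; left; apply/eqP; ring.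
  have [ej | hju] := eqVneq j u.
    subst j.
    rewrite /g !eqxx (negbTE hiu) (negbTE hiv) (negbTE huv) !i1 !i0.
    apply: le_trans (onein i u (- (eps *: lam)) _ elamN _) _.
    - by rewrite !rowChat !eqxx (negbTE hiu) (negbTE hiv); apply/rowP => k; rewrite !mxE; ring.
    - by rewrite (negbTE hiu) (negbTE hiv).
    - by rewrite le_eqVlt; apply/orP; left; apply/eqP; ring.
  have [ej | hjv] := eqVneq j v.
    subst j.
    rewrite /g !eqxx (negbTE hiu) (negbTE hiv) huv' !i1 !i0.
    apply: le_trans (onein i v (eps *: lam) _ elam _) _.
    - by rewrite !rowChat !eqxx (negbTE hiu) (negbTE hiv) huv'; apply/rowP => k; rewrite !mxE; ring.
    - by rewrite (negbTE hiu) (negbTE hiv).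
    - by rewrite le_eqVlt; apply/orP; left; apply/eqP; ring.
  rewrite /g (negbTE hiu) (negbTE hiv) (negbTE hju) (negbTE hjv) !i0.
  rewrite !rowChat (negbTE hiu) (negbTE hiv) (negbTE hju) (negbTE hjv) dhatE.
  rewrite (negbTE hiu) (negbTE hiv) /= !addr0 mulr0 addr0 subrr expr0n /=.
  by rewrite le_eqVlt; apply/orP; left; apply/eqP; ring.
have hst : stress Chat dhat <= bound.
  apply: (@le_trans _ _ (\sum_(i < n) \sum_(j < n | (i < j)%N) g i j)).
    by apply: ler_sum => i _; apply: ler_sum => j hij; exact: key.
  have -> : \sum_(i < n) \sum_(j < n | (i < j)%N) g i j =
     \sum_(i < n) \sum_(j < n) (eps ^+ 2 * (ind R (i < j)%N * ind R (i == u) + ind R (i < j)%N * ind R (j == u)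
        + ind R (i < j)%N * ind R (i == v) + ind R (i < j)%N * ind R (j == v))
       + K * (ind R (i < j)%N * (ind R (i == u) * ind R (j == v)) + ind R (i < j)%N * (ind R (i == v) * ind R (j == u)))).
    apply: eq_bigr => i _; rewrite big_mkcond /=; apply: eq_bigr => j _.
    by case: (i < j)%N; rewrite ?i1 ?i0 /g; ring.
  rewrite sumlin !P1 !P2 !P3 -addrA !P4.
  have -> : ind R (u < v)%N + ind R (v < u)%N = 1.
    case: ltngtP => h; rewrite ?i1 ?i0 ?addr0 ?add0r //.
    by move: huv; rewrite -(inj_eq val_inj) /= h eqxx.
  rewrite /bound /K /eps le_eqVlt; apply/orP; left; apply/eqP.
  field.
  by rewrite subr_eq0 gt_eqF.
split => //; apply: le_trans hst; rewrite /fopt.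
have hlb : has_lbound [set stress C' dhat | C' in [set: 'M[R]_(n, 3)]].
  exists 0 => y [C' _ <-]; rewrite /stress.
  by apply: sumr_ge0 => i _; apply: sumr_ge0 => j _; exact: sqr_ge0.
by apply: (ge_inf hlb); exists Chat.
Qed.
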